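(* Fix integers $2\le k\le n'\le n$, put $M=\lceil n/n'\rceil$ and $r=n-(M-1)n'$. Consider the $n'$-grouped $(k,n)$ random-grid sharing of a single secret bit $s$ described in the context, and for a valid partition $\vec\lambda=(\lambda_1,\ldots,\lambda_M)$ let $\#C(\vec\lambda)$ be the number of distinct indices among the selected share bits. Let $\varphi$ be a permutation of $\{1,\ldots,M\}$ such that $\varphi(\vec\lambda)=(\lambda_{\varphi(1)},\ldots,\lambda_{\varphi(M)})$ is also a valid partition. Then for every integer $h$ with $1\le h\le k$, $$\Pr(\#C(\vec\lambda)=h)=\Pr(\#C(\varphi(\vec\lambda))=h).$$
   Context: Basic bits: for a secret bit $s\in\{0,1\}$, $b_1,\ldots,b_{k-1}$ are independent uniform bits and $b_k=s\oplus b_1\oplus\cdots\oplus b_{k-1}$. There is a fixed sequence $c=(c_1,\ldots,c_{n'})\in\{1,\ldots,k\}^{n'}$ in which every value $1,\ldots,k$ occurs (the index pattern of the base $(k,n')$ scheme). The $n$ share bits are arranged in $M=\lceil n/n'\rceil$ groups: groups $1,\ldots,M-1$ have $n'$ positions and group $M$ has $r=n-(M-1)n'$ positions. For each group $j$, an independent uniformly random permutation $\sigma_j$ of $\{1,\ldots,n'\}$ is drawn (independent of the $b_i$), and the $\delta$-th position of group $j$ carries the index $c_{\sigma_j(\delta)}$ and the bit $b_{c_{\sigma_j(\delta)}}$ (for group $M$ only $\delta\le r$ is used). The $\delta$-th position of group $j$ is the share bit of shadow image number $(j-1)n'+\delta$. A valid partition (of $t$) is a vector $\vec\lambda=(\lambda_1,\ldots,\lambda_M)$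 of non-negative integers with $\sum_j\lambda_j=t$, $\max_j\lambda_j\le n'$ and $\lambda_M\le r$. Given $\vec\lambda$, one selects $\lambda_j$ positions from group $j$ for each $j$ (fixed positions; equivalently, uniformly at random without replacement, independently across groups); $C(\vec\lambda)$ is the multiset of indices carried by the selected positions and $\#C(\vec\lambda)$ is the number of distinct elements of $C(\vec\lambda)$. Probabilities are over the random permutations (and the random selection if used). *)

(* Defs.v *)
From mathcomp Require Import all_boot all_order all_algebra all_fingroup.
Set Implicit Arguments. Unset Strict Implicit. Unset Printing Implicit Defensive.

(* Conventions: shadow indices, group indices, positions and base indices are
   0-based: group j : 'I_M stands for group j+1, position d : 'I_np for
   position d+1, and base index i : 'I_k for index i+1. *)

Definition ngroups (n np : nat) : nat := (n + np.-1) %/ np.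
Definition lastsize (n np : nat) : nat := n - (ngroups n np).-1 * np.

Definition valid_partition (n np t : nat) (lam : 'I_(ngroups n np) -> nat) : Prop :=
  [/\ \sum_(j < ngroups n np) lam j = t,
      (forall j, lam j <= np) &
      (forall j : 'I_(ngroups n np), val j = (ngroups n np).-1 -> lam j <= lastsize n np)].

(* a choice of fixed selected positions realizing lam: lam j positions in group j,
   all of them existing positions (for the last group only d < r exist) *)
Definition selection_for (n np : nat) (lam : 'I_(ngroups n np) -> nat)
  (S : 'I_(ngroups n np) -> {set 'I_np}) : Prop :=
  forall j, #|S j| = lam j /\
    (val j = (ngroups n np).-1 -> forall d : 'I_np, d \in S j -> d < lastsize n np).

(* #C : number of distinct indices carried by the selected positions, when the
   group permutations are sigma: position d of group j carries c (sigma j d) *)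
Definition numC (np k M : nat) (c : 'I_np -> 'I_k) (S : 'I_M -> {set 'I_np})
  (sigma : {ffun 'I_M -> {perm 'I_np}}) : nat :=
  #|\bigcup_(j < M) [set c (sigma j d) | d in S j]|.

(* Pr(#C = h), the permutations sigma_j being independent and uniform *)
Definition prob_numC (np k M : nat) (c : 'I_np -> 'I_k) (S : 'I_M -> {set 'I_np})
  (h : nat) : rat :=
  (#|[set sigma : {ffun 'I_M -> {perm 'I_np}} | numC c S sigma == h]|%:R
    / #|{ffun 'I_M -> {perm 'I_np}}|%:R)%R.

(* Main.v *)
Require Import Defs.
From mathcomp Require Import all_boot all_order all_algebra all_fingroup.
Set Implicit Arguments. Unset Strict Implicit. Unset Printing Implicit Defensive.

Lemma exists_perm_set (T : finType) (A B : {set T}) : #|A| = #|B| ->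
  exists p : {perm T}, forall x, (p x \in B) = (x \in A).
Proof.
move=> hAB.
pose eA := enum A ++ enum (~: A); pose eB := enum B ++ enum (~: B).
have cC : forall X : {set T}, #|X| + #|~: X| = #|T|.
  by move=> X; rewrite cardsC.
have szA : size eA = #|T| by rewrite size_cat -!cardE cC.
have szB : size eB = #|T| by rewrite size_cat -!cardE cC.
have inA : forall x, x \in eA by move=> x; rewrite mem_cat !mem_enum in_setC; case: (x \in A).
have uB : uniq eB.
  rewrite cat_uniq !enum_uniq /= andbT; apply/hasPn => x; rewrite !mem_enum in_setC.
  by move=> hx; rewrite hx.
pose f x := nth x eB (index x eA).
have ltI : forall x, index x eA < size eB by move=> x; rewrite szB -szA index_mem.
have fE : forall x y, f x = nth y eB (index x eA) by move=> x y; apply: set_nth_default.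
have finj : injective f.
  move=> x y hf.
  have : index x eA = index y eA.
    by apply/eqP; rewrite -(nth_uniq x (ltI x) (ltI y) uB) -(fE x x) -(fE y x) hf.
  by move=> hi; rewrite -(nth_index x (inA x)) hi nth_index.
exists (perm finj) => x; rewrite permE /f /eA /eB index_cat nth_cat mem_enum -!cardE.
case hx: (x \in A).
  rewrite /= -hAB cardE index_mem mem_enum hx /=.
  rewrite -(mem_enum (mem B)); apply: mem_nth; rewrite -cardE -hAB cardE index_mem mem_enum hx //.
rewrite -hAB ltnNge leq_addr /= addKn.
have hxc : x \in enum (~: A) by rewrite mem_enum in_setC hx.
have : nth x (enum (~: B)) (index x (enum (~: A))) \in enum (~: B).
  apply: mem_nth; rewrite -cardE.
  have := index_mem x (enum (~:A)); rewrite hxc -cardE => hl.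
  suff -> : #|~: B| = #|~: A| by [].
  by apply/eqP; rewrite -(eqn_add2l #|A|) {1}hAB !cC.
by rewrite mem_enum in_setC => /negPf.
Qed.

Theorem lemma3 (k np n : nat) (c : 'I_np -> 'I_k)
  (hk : 2 <= k) (hknp : k <= np) (hnpn : np <= n)
  (csurj : forall i : 'I_k, exists d : 'I_np, c d = i)
  (t : nat) (lam : 'I_(ngroups n np) -> nat)
  (phi : {perm 'I_(ngroups n np)})
  (hlam : valid_partition t lam)
  (hphilam : valid_partition t (fun j => lam (phi j)))
  (S S' : 'I_(ngroups n np) -> {set 'I_np})
  (hS : selection_for lam S)
  (hS' : selection_for (fun j => lam (phi j)) S')
  (h : nat) (h1 : 1 <= h) (hk2 : h <= k) :
  prob_numC c S h = prob_numC c S' h.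
Proof.
have : forall j, exists p : {perm 'I_np}, forall x, (p x \in S (phi j)) = (x \in S' j).
  move=> j; apply: exists_perm_set.
  by rewrite (proj1 (hS' j)) (proj1 (hS (phi j))).
case/fin_all_exists => tau htau.
pose F (sg : {ffun 'I_(ngroups n np) -> {perm 'I_np}}) :=
  [ffun j => (tau j * sg (phi j))%g] : {ffun 'I_(ngroups n np) -> {perm 'I_np}}.
have Finj : injective F.
  move=> s1 s2 /ffunP hF; apply/ffunP => i.
  have := hF ((phi^-1)%g i); rewrite !ffunE permKV => /mulgI //.
have FE : forall sg, numC c S' (F sg) = numC c S sg.
  move=> sg; rewrite /numC.
  have key : forall j, [set c (F sg j d) | d in S' j] = [set c (sg (phi j) e) | e in S (phi j)].
    move=> j; apply/setP => y; apply/imsetP/imsetP => [[d hd ->]|[e he ->]].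
      by exists (tau j d); [rewrite htau | rewrite ffunE permM].
    exists ((tau j)^-1%g e); first by rewrite -htau permKV.
    by rewrite ffunE permM permKV.
  apply: eq_card => y; apply/bigcupP/bigcupP => [[j _ hy]|[j _ hy]].
    by exists (phi j) => //; rewrite -key.
  by exists ((phi^-1)%g j) => //; rewrite key permKV.
rewrite /prob_numC; congr (_%:R / _)%R.
rewrite -[in RHS](card_preimset _ Finj); apply: eq_card => sg.
by rewrite !inE FE.
Qed.
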